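(* Let $G$ be a graph, let $\mathcal{P}=(X_1,\ldots,X_l)$ be a path decomposition of width $k$ of $G$, and let $S\subseteq V(G)$ be such that the number $c$ of $S$-branches satisfies $c>k$. Let $H_1,\ldots,H_c$ be the $S$-branches indexed so that $\alpha(H_1)\leq\cdots\leq\alpha(H_c)$, and let $H^1,\ldots,H^c$ be the $S$-branches indexed so that $\beta(H^1)\leq\cdots\leq\beta(H^c)$. Then (i) $\alpha(H_i)\geq\alpha(x)$ for all $i\geq k+1$ and all $x\in S$; (ii) $\beta(H^i)\leq\beta(x)$ for all $i\leq c-k$ and all $x\in S$.
   Context: A path decomposition of $G$ is a sequence $(X_1,\ldots,X_l)$ of subsets of $V(G)$ covering $V(G)$, such that every edge lies in some $X_i$, and $X_i\cap X_k\subseteq X_j$ whenever $i\leq j\leq k$; its width is $\max_i|X_i|-1$. For a subgraph $H$ (or vertex $v$, viewed as a one-vertex subgraph), $\alpha(H)=\min\{i: X_i\cap V(H)\neq\emptyset\}$ and $\beta(H)=\max\{i: X_i\cap V(H)\neq\emptyset\}$. For $S\subseteq V(G)$, an $S$-component is a connected component $H$ of $G-S$ such that every vertex of $S$ has a neighbor in $V(H)$; an $S$-branch is an $S$-component with at least two vertices. *)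

(* Defs.v *)
From mathcomp Require Import all_boot.
Set Implicit Arguments. Unset Strict Implicit. Unset Printing Implicit Defensive.

(* A (simple) graph: vertex set a finType T, adjacency e : rel T
   (assumed symmetric and irreflexive in the theorem).
   A path decomposition is a sequence X of bags; bag i (0-based) is nth set0 X i. *)

Definition bag (T : finType) (X : seq {set T}) (i : nat) : {set T} := nth set0 X i.

Definition is_path_decomposition (T : finType) (e : rel T) (X : seq {set T}) : Prop :=
  [/\ (forall v : T, exists2 i, i < size X & v \in bag X i),
      (forall u v : T, e u v -> exists2 i, i < size X & (u \in bag X i) && (v \in bag X i))
    & (forall i j l, i <= j -> j <= l -> l < size X ->
         bag X i :&: bag X l \subset bag X j)].

Definition pd_width (T : finType) (X : seq {set T}) : nat :=
  (\max_(A <- X) #|A|).-1.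

Definition alpha (T : finType) (X : seq {set T}) (H : {set T}) : nat :=
  find (fun B : {set T} => ~~ [disjoint B & H]) X.

Definition beta (T : finType) (X : seq {set T}) (H : {set T}) : nat :=
  \max_(i < size X | ~~ [disjoint bag X i & H]) (i : nat).

Definition rel_minus (T : finType) (e : rel T) (S : {set T}) : rel T :=
  [rel x y | [&& e x y, x \notin S & y \notin S]].

Definition is_component_minus (T : finType) (e : rel T) (S C : {set T}) : bool :=
  [exists v, (v \notin S) && (C == [set u | connect (rel_minus e S) v u])].

Definition is_S_component (T : finType) (e : rel T) (S C : {set T}) : bool :=
  is_component_minus e S C && [forall x in S, exists y in C, e x y].

Definition is_S_branch (T : finType) (e : rel T) (S C : {set T}) : bool :=
  is_S_component e S C && (1 < #|C|).

Definition S_branches (T : finType) (e : rel T) (S : {set T}) : {set {set T}} :=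
  [set C : {set T} | is_S_branch e S C].

(* Main.v *)
Require Import Defs.
From mathcomp Require Import all_boot zify.
Set Implicit Arguments. Unset Strict Implicit. Unset Printing Implicit Defensive.

Section S.
Variables (T : finType) (e : rel T) (X : seq {set T}).
Hypothesis hPD : is_path_decomposition e X.

Lemma interval (r : rel T) (hr : forall a b, r a b -> e a b) :
  forall p u, path r u p -> forall m a b, a <= m -> m <= b -> b < size X ->
  u \in bag X a -> last u p \in bag X b -> exists2 z, connect r u z & z \in bag X m.
Proof.
case: hPD => _ hE hI.
elim=> [|y p IH] u /= hp m a b ham hmb hb ua ub.
  exists u => //; have := hI a m b ham hmb hb; move/subsetP; apply.
  by rewrite inE ua ub.
move/andP: hp => [ruy hp].
have [r0 hr0 /andP[ur0 yr0]] := hE _ _ (hr _ _ ruy).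
case: (leqP m r0) => hm.
  exists u => //.
  have := hI a m r0 ham hm hr0; move/subsetP; apply.
  by rewrite inE ua ur0.
have [z hz zm] := IH y hp m r0 b (ltnW hm) hmb hb yr0 ub.
exists z => //; apply: connect_trans hz; exact: connect1.
Qed.

Lemma alpha_le (H : {set T}) v r : v \in H -> v \in bag X r -> r < size X -> alpha X H <= r.
Proof.
move=> vH vr hr; rewrite leqNgt; apply/negP => lt.
have := before_find set0 lt; rewrite -/(bag X r) /=.
move/negbFE; rewrite -setI_eq0 => /eqP E.
have : v \in bag X r :&: H by rewrite inE vr vH.
by rewrite E inE.
Qed.

Lemma alpha_meet (H : {set T}) v r : v \in H -> v \in bag X r -> r < size X ->
  alpha X H < size X /\ exists2 z, z \in H & z \in bag X (alpha X H).
Proof.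
move=> vH vr hr.
have hh : has (fun B : {set T} => ~~ [disjoint B & H]) X.
  apply/hasP; exists (bag X r); first exact: mem_nth.
  rewrite -setI_eq0; apply/set0Pn; exists v; by rewrite inE vr vH.
split; first by rewrite /alpha -has_find.
have := nth_find set0 hh; rewrite -/(alpha X H) -/(bag X _) -setI_eq0.
move/set0Pn=> [z]; rewrite inE => /andP[z1 z2]; by exists z.
Qed.

Lemma beta_ge (H : {set T}) v r : v \in H -> v \in bag X r -> r < size X -> r <= beta X H.
Proof.
move=> vH vr hr.
have := @leq_bigmax_cond _ (fun i : 'I_(size X) => ~~ [disjoint bag X i & H]) (fun i => nat_of_ord i) (Ordinal hr).
apply; rewrite /= -setI_eq0; apply/set0Pn; exists v; by rewrite inE vr vH.
Qed.

Lemma beta_meet (H : {set T}) v r : v \in H -> v \in bag X r -> r < size X ->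
  beta X H < size X /\ exists2 z, z \in H & z \in bag X (beta X H).
Proof.
move=> vH vr hr.
have P0 : (fun i : 'I_(size X) => ~~ [disjoint bag X i & H]) (Ordinal hr).
  rewrite /= -setI_eq0; apply/set0Pn; exists v; by rewrite inE vr vH.
rewrite /beta (@bigmax_eq_arg _ (Ordinal hr) (fun i : 'I_(size X) => ~~ [disjoint bag X i & H]) (fun i => nat_of_ord i) P0).
case: arg_maxnP => // i Pi _.
split; first exact: ltn_ord.
move: Pi; rewrite -setI_eq0 => /set0Pn [z]; rewrite inE => /andP[z1 z2]; by exists z.
Qed.

End S.

Section S2.
Variables (T : finType) (e : rel T) (S : {set T}).
Hypothesis e_sym : symmetric e.

Lemma branch_info C : C \in S_branches e S ->
  [/\ exists2 v, v \notin S & C = [set u | connect (rel_minus e S) v u],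
      (forall x, x \in S -> exists2 y, y \in C & e x y) & 1 < #|C|].
Proof.
rewrite inE /is_S_branch /is_S_component => /andP[/andP[/existsP[v /andP[vS /eqP ->]] /forallP hx] hc].
split => //; first by exists v.
move=> x xS; have := hx x; rewrite xS /= => /existsP[y /andP[yC exy]]; by exists y.
Qed.

Lemma notS v u : connect (rel_minus e S) v u -> v \notin S -> u \notin S.
Proof.
move/connectP=> [p hp ->]; elim: p v hp => [|y p IH] v //= /andP[/andP[_ /andP[_ yS]] hp] _.
exact: IH.
Qed.

Lemma rm_sym : symmetric (rel_minus e S).
Proof. move=> a b; rewrite /rel_minus /= e_sym; by case: (a \in S); case: (b \in S). Qed.

Lemma disj C C' z : C \in S_branches e S -> C' \in S_branches e S -> z \in C -> z \in C' -> C = C'.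
Proof.
move=> /branch_info[[v vS ->] _ _] /branch_info[[v' vS' ->] _ _].
rewrite !inE => hv hv'.
have cs := sym_connect_sym rm_sym.
have hvv : connect (rel_minus e S) v v'.
  apply: connect_trans hv _; by rewrite cs.
apply/setP => u; rewrite !inE; exact: (same_connect cs hvv).
Qed.

Lemma core (X : seq {set T}) k m x (g : 'I_k.+1 -> {set T}) :
  pd_width X = k -> m < size X -> x \in S -> x \in bag X m -> injective g ->
  (forall t, g t \in S_branches e S) -> (forall t, exists2 z, z \in g t & z \in bag X m) -> False.
Proof.
move=> hw hm xS xm ginj gbr gz.
pose z t := odflt x [pick y in g t :&: bag X m].
have zP t : z t \in g t :&: bag X m.
  rewrite /z; case: pickP => [y ->|] //= h.
  have [y y1 y2] := gz t; have := h y; by rewrite inE y1 y2.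
have zinj : injective z.
  move=> t1 t2 E; apply: ginj; apply: (@disj _ _ (z t1) (gbr t1) (gbr t2)).
    by have := zP t1; rewrite inE => /andP[].
  by rewrite E; have := zP t2; rewrite inE => /andP[].
have sub : [set z t | t in 'I_k.+1] \subset bag X m :\ x.
  apply/subsetP => y /imsetP[t _ ->].
  have := zP t; rewrite !inE => /andP[h1 ->]; rewrite andbT.
  have [[v vS E] _ _] := branch_info (gbr t).
  move: h1; rewrite E inE => /notS /(_ vS); apply: contra => /eqP ->; done.
have := subset_leq_card sub; rewrite card_imset // card_ord.
have hb : #|bag X m| <= \max_(A <- X) #|A|.
  exact: (@leq_bigmax_seq _ X xpredT (fun A : {set T} => #|A|) _ (mem_nth set0 hm) isT).
have := cardsD1 x (bag X m); rewrite xm /=.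
move: hw; rewrite /pd_width; lia.
Qed.
End S2.

Lemma meet_between (T : finType) (e : rel T) (X : seq {set T}) S C u y a b m :
  symmetric e -> is_path_decomposition e X -> C \in S_branches e S ->
  u \in C -> u \in bag X a -> y \in C -> y \in bag X b -> a <= m -> m <= b -> b < size X ->
  exists2 z, z \in C & z \in bag X m.
Proof.
move=> es hPD /branch_info[[v vS E] _ _] uC ua yC yb ham hmb hb.
move: uC yC; rewrite E !inE => hu hy.
have cs := sym_connect_sym (rm_sym S es).
have : connect (rel_minus e S) u y by apply: connect_trans hy; rewrite cs.
move/connectP=> [p hp hl].
have hr : forall a b, rel_minus e S a b -> e a b by move=> ? ? /andP[].
have yl : last u p \in bag X b by rewrite -hl.
have [z hz zm] := interval hPD hr hp ham hmb hb ua yl.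
exists z => //; rewrite inE; exact: connect_trans hz.
Qed.

Theorem mainTheorem12 (T : finType) (e : rel T) (X : seq {set T}) (k : nat)
  (S : {set T})
  (e_sym : symmetric e) (e_irr : irreflexive e)
  (hPD : is_path_decomposition e X) (hw : pd_width X = k)
  (hc : k < #|S_branches e S|)
  (Ha Hb : 'I_#|S_branches e S| -> {set T})
  (Ha_inj : injective Ha) (Ha_br : forall i, Ha i \in S_branches e S)
  (Ha_sort : forall i j : 'I_#|S_branches e S|, i <= j -> alpha X (Ha i) <= alpha X (Ha j))
  (Hb_inj : injective Hb) (Hb_br : forall i, Hb i \in S_branches e S)
  (Hb_sort : forall i j : 'I_#|S_branches e S|, i <= j -> beta X (Hb i) <= beta X (Hb j)) :
  (forall i : 'I_#|S_branches e S|, k <= i ->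
     forall x, x \in S -> alpha X [set x] <= alpha X (Ha i)) /\
  (forall i : 'I_#|S_branches e S|, i < #|S_branches e S| - k ->
     forall x, x \in S -> beta X (Hb i) <= beta X [set x]).
Proof.
have [hcov hedge _] := hPD.
have winj : injective (widen_ord hc).
  by move=> t1 t2 /(congr1 val) /= /val_inj.
have xin1 : forall x : T, x \in [set x] by move=> x; rewrite inE.
split.
- move=> i hi x xS; rewrite leqNgt; apply/negP => hlt.
  have [r0 hr0 xr0] := hcov x.
  have [hm [x' ]] := alpha_meet (xin1 x) xr0 hr0.
  rewrite inE => /eqP -> xm.
  apply: (@core T e S e_sym X k (alpha X [set x]) x (fun t => Ha (widen_ord hc t))) => //.
    by move=> t1 t2 /Ha_inj /winj.
  move=> t; set j := widen_ord hc t.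
  have hj : alpha X (Ha j) < alpha X [set x].
    apply: leq_ltn_trans hlt; apply: Ha_sort; rewrite /j /=.
    have := ltn_ord t; move: hi; rewrite /widen_ord /=; lia.
  have [_ hn hcard] := branch_info (Ha_br j).
  have [y yC exy] := hn x xS.
  have [u uC] : exists u, u \in Ha j.
    by apply/set0Pn; rewrite -card_gt0; apply: ltnW.
  have [r1 hr1 ur1] := hcov u.
  have [ha [u' u'C u'a]] := alpha_meet uC ur1 hr1.
  have [r hr /andP[xr yr]] := hedge _ _ exy.
  have := alpha_le (xin1 x) xr hr => hmr.
  exact: (meet_between e_sym hPD (Ha_br j) u'C u'a yC yr (ltnW hj) hmr hr).
- move=> i hi x xS; rewrite leqNgt; apply/negP => hlt.
  have [r0 hr0 xr0] := hcov x.
  have [hm [x' ]] := beta_meet (xin1 x) xr0 hr0.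
  rewrite inE => /eqP -> xm.
  apply: (@core T e S e_sym X k (beta X [set x]) x (fun t => Hb (rev_ord (widen_ord hc t)))) => //.
    by move=> t1 t2 /Hb_inj /rev_ord_inj /winj.
  move=> t; set j := rev_ord (widen_ord hc t).
  have hj : beta X [set x] < beta X (Hb j).
    apply: (leq_trans hlt); apply: Hb_sort; rewrite /j /=.
    have := ltn_ord t; move: hi; rewrite /=; lia.
  have [_ hn hcard] := branch_info (Hb_br j).
  have [y yC exy] := hn x xS.
  have [u uC] : exists u, u \in Hb j.
    by apply/set0Pn; rewrite -card_gt0; apply: ltnW.
  have [r1 hr1 ur1] := hcov u.
  have [hb [u' u'C u'a]] := beta_meet uC ur1 hr1.
  have [r hr /andP[xr yr]] := hedge _ _ exy.
  have := beta_ge (xin1 x) xr hr => hmr.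
  exact: (meet_between e_sym hPD (Hb_br j) yC yr u'C u'a hmr (ltnW hj) hb).
Qed.
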